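(* Let $k\geq 1$ be an integer and let $G$ be a graph of order $n$. If \[ \mu(G)>\frac{k-1}{2}+\sqrt{kn+\frac{(k+1)^2}{4}}, \] then $G$ contains $C_{2k+1}$ or $C_{2k+2}$ as a subgraph.
   Context: All graphs are finite and simple. $\mu(G)$ denotes the largest eigenvalue of the adjacency matrix of $G$. $C_r$ denotes the cycle on $r$ vertices. *)

(* Defs.v *)
From HB Require Import structures.
From mathcomp Require Import all_boot all_order all_algebra.
From mathcomp Require Import all_reals.
Set Implicit Arguments. Unset Strict Implicit. Unset Printing Implicit Defensive.
Import Order.TTheory GRing.Theory Num.Theory.
Local Open Scope ring_scope.

Definition simple_graph (n : nat) (e : rel 'I_n) : Prop :=
  symmetric e /\ irreflexive e.

Definition adj_mx (R : realType) (n : nat) (e : rel 'I_n) : 'M[R]_n :=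
  \matrix_(i, j) (e i j)%:R.

Definition is_spectral_radius (R : realType) (n : nat) (e : rel 'I_n) (mu : R) : Prop :=
  eigenvalue (adj_mx R e) mu /\
  (forall a : R, eigenvalue (adj_mx R e) a -> a <= mu).

(* G contains the cycle C_r as a (not necessarily induced) subgraph:
   r distinct vertices v_0,...,v_{r-1} with v_i ~ v_{i+1 mod r}. *)
Definition contains_cycle (n : nat) (e : rel 'I_n) (r : nat) : Prop :=
  exists f : 'I_r -> 'I_n, injective f /\ forall i : 'I_r, e (f i) (f (ordS i)).

(* Main.v *)
Require Import Defs.
From HB Require Import structures.
From mathcomp Require Import all_boot all_order all_algebra.
From mathcomp Require Import all_reals.
From mathcomp Require Import zify ring lra.
From Stdlib Require Import Classical_Prop.
Set Implicit Arguments. Unset Strict Implicit. Unset Printing Implicit Defensive.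
Import Order.TTheory GRing.Theory Num.Theory.
Section Comb.
Variable T : finType.
Variable e : rel T.
Hypothesis esym : symmetric e.
Hypothesis eirr : irreflexive e.
Variable inA : pred T.
Variable k : nat.
Hypothesis k1 : 0 < k.

Definition h : rel T := fun x y => e x y && (inA x || inA y).

Lemma hsym : symmetric h.
Proof. by move=> x y; rewrite /h esym orbC. Qed.

Lemma hirr : irreflexive h.
Proof. by move=> x; rewrite /h eirr. Qed.

Definition vpath (S : {set T}) (s : seq T) :=
  [&& uniq s, all (fun x => x \in S) s & sorted h s].

Definition bad (S : {set T}) := exists s z, vpath S s /\
  2 * k <= size s <= 2 * k + 1 /\ inA (head z s) /\ inA (last z s).

Lemma sum_count (P : pred T) (s : seq T) : \sum_(x <- s) (P x : nat) = count P s.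
Proof. by elim: s => [|x s IH]; rewrite ?big_nil ?big_cons ?IH. Qed.

Lemma vpath_rev (S : {set T}) s : vpath S s -> vpath S (rev s).
Proof.
case/and3P=> u a p; apply/and3P; split; rewrite ?rev_uniq ?all_rev //.
rewrite rev_sorted; apply: etrans p; apply: eq_sorted => x y; exact: hsym.
Qed.

Lemma head_rev (z : T) s : head z (rev s) = last z s.
Proof. by case/lastP: s => [|s x] //=; rewrite rev_rcons last_rcons. Qed.

Lemma last_rev (z : T) s : last z (rev s) = head z s.
Proof. by case: s => [|x s] //=; rewrite rev_cons last_rcons. Qed.

Lemma prefix_bad (S : {set T}) s z : vpath S s -> inA (head z s) -> 2 * k + 1 <= size s -> bad S.
Proof.
move=> vp hA sz.
have vt : forall n, vpath S (take n s).
  move=> n; case/and3P: vp => u a p; apply/and3P; split.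
  - by move: u; rewrite -{1}(cat_take_drop n s) cat_uniq; case/and3P.
  - by move: a; rewrite -{1}(cat_take_drop n s) all_cat; case/andP.
  - case: s p {u a hA sz} => [|x s] //=; case: n => [|n] //=.
    by rewrite -{1}(cat_take_drop n s) cat_path; case/andP.
case: s vp hA sz vt => [|x p] vp hA sz vt; first by move: sz => /=; lia.
rewrite /= in hA.
have hx : forall n, head z (take n.+1 (x :: p)) = x by [].
case lA: (inA (last x (take (2 * k).-1 p))).
- exists (take (2 * k) (x :: p)), z; split; first exact: vt.
  have -> : 2 * k = (2 * k).-1.+1 by lia.
  rewrite /= size_take; split; first by move: sz => /=; case: ifP; lia.
  by split.
- have lt : (2 * k).-1 < size p by move: sz => /=; lia.
  have ht : h (last x (take (2 * k).-1 p)) (nth x p (2 * k).-1).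
    case/and3P: vp => _ _ /= pp.
    move: pp; rewrite -{1}(cat_take_drop (2 * k).-1 p) cat_path => /andP[_].
    by rewrite (drop_nth x lt) /= => /andP[].
  have yA : inA (nth x p (2 * k).-1) by move: ht; rewrite /h lA /=; case/andP.
  exists (take (2 * k + 1) (x :: p)), z; split; first exact: vt.
  have e1 : 2 * k + 1 = (2 * k).+1 by lia.
  rewrite e1 /= size_take; split; first by move: sz => /=; case: ifP; lia.
  split => //.
  have -> : 2 * k = (2 * k).-1.+1 by lia.
  by rewrite (take_nth x lt) last_rcons.
Qed.


Lemma vpath_perm (S : {set T}) c d : vpath S c -> perm_eq c d -> sorted h d -> vpath S d.
Proof.
case/and3P=> u a _ pcd sd; apply/and3P; split => //.
- by rewrite -(perm_uniq pcd).
- by rewrite -(perm_all _ pcd).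
Qed.

Lemma vpath_size (S : {set T}) s : vpath S s -> size s <= #|S|.
Proof.
case/and3P=> u a _; rewrite -(card_uniqP u); apply: subset_leq_card.
by apply/subsetP => x xs; move/allP: a; apply.
Qed.

Lemma exists_max (S : {set T}) x : x \in S ->
  exists s, vpath S s /\ s != [::] /\ (forall t, vpath S t -> size t <= size s).
Proof.
move=> xS.
suff: forall d s, vpath S s -> s != [::] -> #|S| - size s <= d ->
  exists s, vpath S s /\ s != [::] /\ (forall t, vpath S t -> size t <= size s).
  move/(_ #|S| [:: x]); apply => //; try lia; by rewrite /vpath /= xS.
elim=> [|d IH] s vs ns hd.
  exists s; split => //; split => // t vt.
  have := vpath_size vt; lia.
case: (classic (exists t, vpath S t /\ size s < size t)) => [[t [vt st]]|nt].
  apply: (IH t vt) => //; last lia.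
  by case: t st {vt} => // /=; rewrite ltn0.
exists s; split => //; split => // t vt.
rewrite leqNgt; apply/negP => st; apply: nt; by exists t.
Qed.

Definition degS (S : {set T}) v := \sum_(w in S) (h v w : nat).
Definition dA (S : {set T}) v := \sum_(w in S) ((inA w && e v w) : nat).

Lemma deg_le_count (S : {set T}) s v : uniq s -> (forall w, w \in S -> h v w -> w \in s) ->
  degS S v <= count (h v) s.
Proof.
move=> us cl; rewrite -sum_count big_uniq // /degS big_mkcond [X in _ <= X]big_mkcond.
apply: leq_sum => w _; case wS: (w \in S) => //; case hv: (h v w) => //.
by rewrite (cl w wS hv).
Qed.

Lemma count_nocross (x : T) p :
  ~~ has (fun i => h x (nth x p i) && h (nth x (x :: p) i) (last x p)) (iota 0 (size p)) ->
  count (h x) (x :: p) + count (fun w => h w (last x p)) (x :: p) <= size p.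
Proof.
move=> nh.
have c1 : count (h x) (x :: p) = count (fun i => h x (nth x p i)) (iota 0 (size p)).
  rewrite /= hirr add0n -(count_map (nth x p) (h x)).
  by rewrite map_nth_iota0 // take_size.
have c2 : count (fun w => h w (last x p)) (x :: p) =
          count (fun i => h (nth x (x :: p) i) (last x p)) (iota 0 (size p)).
  rewrite -(count_map (nth x (x :: p)) (fun w => h w (last x p))).
  rewrite map_nth_iota0; last by rewrite /=; lia.
  have E : x :: p = take (size p) (x :: p) ++ [:: last x p].
    by rewrite {2}(lastI x p) -cats1 take_size_cat ?size_belast // cats1 -lastI.
  by rewrite {1}E count_cat /= hirr !addn0.
rewrite c1 c2 -count_predUI.
have -> : count (predI (fun i => h x (nth x p i))
       (fun i => h (nth x (x :: p) i) (last x p))) (iota 0 (size p)) = 0.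
  by apply/eqP; rewrite -leqn0 leqNgt -has_count.
by rewrite addn0 (leq_trans (count_size _ _)) // size_iota.
Qed.

Lemma cross_cycle (x : T) p i : i < size p -> path h x p ->
  h x (nth x p i) -> h (nth x (x :: p) i) (last x p) ->
  cycle h (x :: (take i p ++ rev (drop i p))) /\
  perm_eq (x :: (take i p ++ rev (drop i p))) (x :: p).
Proof.
move=> ip pp h1 h2; split; last first.
  rewrite perm_cons -{3}(cat_take_drop i p) perm_cat2l.
  exact/permPl/perm_rev.
have lt : last x (take i p) = nth x (x :: p) i.
  rewrite (last_nth x) size_take ip.
  case: i ip {h1 h2} => [|j] ip //=; rewrite nth_take //.
have dr := drop_nth x ip.
move: (pp); rewrite -{1}(cat_take_drop i p) cat_path => /andP[p1 p2].
rewrite /cycle rcons_path cat_path p1 /= lt.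
move: p2; rewrite lt dr /= => /andP[hy py].
have ll : last x p = last (nth x p i) (drop i.+1 p).
  by rewrite -{1}(cat_take_drop i p) last_cat dr.
rewrite last_cat last_rev /= hsym h1 andbT.
rewrite (lastI (nth x p i)) rev_rcons /= -ll h2 /= ll.
rewrite rev_path; apply: etrans py; apply: eq_path => a b; exact: hsym.
Qed.

Lemma rot_head (z : T) c j : j < size c -> head z (rot j c) = nth z c j.
Proof. by move=> jc; rewrite /rot (drop_nth z jc). Qed.

Lemma cycle_sorted c : cycle h c -> sorted h c.
Proof. by case: c => [|y q] //=; rewrite rcons_path; case/andP. Qed.

Lemma vpath_rot (S : {set T}) c j : vpath S c -> cycle h c -> vpath S (rot j c).
Proof.
move=> vc cc; apply: (vpath_perm vc); first by rewrite perm_sym perm_rot.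
by apply: cycle_sorted; rewrite rot_cycle.
Qed.

Lemma cycle_extend (S : {set T}) c w y : vpath S c -> cycle h c -> w \in S -> w \notin c ->
  y \in c -> h w y -> vpath S (w :: rot (index y c) c).
Proof.
move=> vc cc wS wc yc hwy.
have vr := vpath_rot (index y c) vc cc.
case/and3P: vr => u a s; apply/and3P; split.
- by rewrite /= u mem_rot wc.
- by rewrite /= wS.
- have ic : index y c < size c by rewrite index_mem.
  move: s; case E: (rot (index y c) c) => [|y' q].
    by move: ic; rewrite -(size_rot (index y c)) E.
  move=> sq; have := rot_head y ic; rewrite E /= nth_index // => ey.
  by subst y'; rewrite /= hwy.
Qed.

Lemma cycle_has_A c : cycle h c -> 2 <= size c -> has inA c.
Proof.
case: c => [|y [|z q]] //= cc _; move: cc; rewrite /= => /andP[].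
by rewrite /h => /andP[_]; case/orP => ->; rewrite ?orbT.
Qed.

Lemma cycle_bad_big (S : {set T}) c : vpath S c -> cycle h c -> 2 * k + 1 <= size c -> bad S.
Proof.
move=> vc cc sc.
have /hasP [y yc yA] : has inA c by apply: cycle_has_A => //; lia.
have vr := vpath_rot (index y c) vc cc.
apply: (prefix_bad (z := y) vr); last by rewrite size_rot.
by rewrite rot_head ?index_mem // nth_index.
Qed.

Lemma cycle_bad_dense (S : {set T}) c (z : T) : vpath S c -> cycle h c -> size c = 2 * k ->
  k < count inA c -> bad S.
Proof.
move=> vc cc sc kc.
have cP : count (fun j => inA (nth z c j)) (iota 0 (size c)) = count inA c.
  by rewrite -(count_map (nth z c) inA) map_nth_iota0 // take_size.
have cQ : count (fun j => inA (nth z (rot 1 c) j)) (iota 0 (size c)) = count inA c.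
  rewrite -(count_map (nth z (rot 1 c)) inA) -(size_rot 1) map_nth_iota0 //.
  by rewrite take_size; apply/permP; rewrite perm_rot.
have : 0 < count (predI (fun j => inA (nth z c j)) (fun j => inA (nth z (rot 1 c) j)))
         (iota 0 (size c)).
  have := count_predUI (fun j => inA (nth z c j)) (fun j => inA (nth z (rot 1 c) j))
          (iota 0 (size c)).
  have := count_size (predU (fun j => inA (nth z c j)) (fun j => inA (nth z (rot 1 c) j)))
          (iota 0 (size c)).
  rewrite size_iota cP cQ; lia.
rewrite -has_count => /hasP [j]; rewrite mem_iota add0n => /andP[_ jc] /andP[a1 a2].
have v1 : vpath S (rot 1 c) := vpath_rot 1 vc cc.
have c1 : cycle h (rot 1 c) by rewrite rot_cycle.
have vd := vpath_rot j v1 c1.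
exists (rot j (rot 1 c)), z; split => //; split; first by rewrite !size_rot sc; lia.
split; first by rewrite rot_head ?size_rot.
rewrite rot_rot.
move: (rot_head z jc); case E: (rot j c) => [|y q].
  by move: jc; rewrite -(size_rot j) E.
by rewrite /= rot1_cons last_rcons => ->.
Qed.


Lemma ltn_pred_le a b : a < b -> a <= b - 1.
Proof. lia. Qed.

Lemma ar_pos kk a b : 0 < kk -> a + b = 2 * kk -> a <= kk -> 0 < b.
Proof. lia. Qed.

Lemma ar_key kk D0 Dl C0 Cl n (a b : bool) : kk < D0 + a -> kk < Dl + b ->
  D0 <= C0 -> Dl <= Cl -> C0 + Cl <= n -> 2 * kk + 2 <= n + a + b.
Proof. case: a; case: b => /=; lia. Qed.

Lemma ar2 kk n (b : bool) : 2 * kk + 2 <= n + true + b -> 2 * kk + 1 <= n.+1.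
Proof. case: b => /=; lia. Qed.

Lemma ar2b kk n : 2 * kk + 2 <= n + false + true -> 2 * kk + 1 <= n.+1.
Proof. lia. Qed.

Lemma ar3 kk n : 2 * kk + 2 <= n.+1 -> 2 * kk + 1 <= n.+1.
Proof. lia. Qed.

Definition closedZ (S Z : {set T}) := forall a b, a \in Z -> b \in S :\: Z -> ~~ h a b.

Lemma irred (S : {set T}) x : x \in S -> ~ bad S ->
  (forall v, v \in S -> k < degS S v + inA v) ->
  exists Z : {set T}, [/\ Z \subset S, Z != set0, #|Z| <= 2 * k - 1 & closedZ S Z].
Proof.
move=> xS nb irr.
have [s [vs [ns mx]]] := exists_max xS.
case: s vs ns mx => [|x0 p] // vs _ mx.
set l := last x0 p.
have vS : forall w, w \in x0 :: p -> w \in S.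
  by move=> w ws; case/and3P: vs => _ /allP a _; apply: a.
have cl0 : forall w, w \in S -> h x0 w -> w \in x0 :: p.
  move=> w wS hw; apply/negPn/negP => wn.
  have : vpath S (w :: x0 :: p).
    case/and3P: vs => u a sp; apply/and3P; split.
    - by rewrite cons_uniq wn u.
    - by rewrite /= wS.
    - by rewrite /= hsym hw.
  by move/mx => /=; rewrite ltnn.
have cll : forall w, w \in S -> h l w -> w \in x0 :: p.
  move=> w wS hw; apply/negPn/negP => wn.
  have : vpath S (rcons (x0 :: p) w).
    case/and3P: vs => u a sp; apply/and3P; split.
    - by rewrite rcons_uniq wn u.
    - by rewrite all_rcons wS a.
    - by rewrite /= rcons_path; rewrite /= in sp; rewrite sp hw.
  by move/mx; rewrite size_rcons ltnn.
have up : uniq (x0 :: p) by case/and3P: vs.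
have d0 := deg_le_count up cl0.
have dl : degS S l <= count (fun w => h w l) (x0 :: p).
  rewrite (eq_count (a2 := h l)); first exact: deg_le_count.
  by move=> w; rewrite hsym.
have x0S : x0 \in S by apply: vS; rewrite inE eqxx.
have lS : l \in S by apply: vS; rewrite /l mem_last.
case: (boolP (has (fun i => h x0 (nth x0 p i) && h (nth x0 (x0 :: p) i) (last x0 p))
                   (iota 0 (size p)))) => [/hasP [i] | nh].
  rewrite mem_iota add0n => /andP[_ ip] /andP[h1 h2].
  have pp : path h x0 p by case/and3P: vs.
  have [cc pc] := cross_cycle ip pp h1 h2.
  set c := x0 :: _ in cc pc.
  have vc : vpath S c.
    apply: (vpath_perm vs); first by rewrite perm_sym.
    exact: cycle_sorted.
  have sc : size c = size (x0 :: p) := perm_size pc.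
  have clc : closedZ S [set w | w \in c].
    move=> a b; rewrite inE => ac; rewrite !inE => /andP[bc bS].
    apply/negP => hab.
    have := cycle_extend vc cc bS bc ac; rewrite hsym => /(_ hab) /mx.
    by rewrite /= size_rot sc ltnn.
  have ZS : [set w | w \in c] \subset S.
    apply/subsetP => w; rewrite inE (perm_mem pc); exact: vS.
  case: (ltnP (size c) (2 * k)) => [small|big].
    exists [set w | w \in c]; split => //.
    - by apply/set0Pn; exists x0; rewrite inE /c inE eqxx.
    - have -> : #|[set w | w \in c]| = #|c| by apply: eq_card => w; rewrite inE.
      exact: leq_trans (card_size c) (ltn_pred_le small).
  case: (ltnP (2 * k) (size c)) => [big2|eqc].
    by exfalso; apply: nb; apply: (cycle_bad_big vc cc); rewrite addn1.
  have ec : size c = 2 * k by apply/eqP; rewrite eqn_leq big eqc.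
  case: (ltnP k (count inA c)) => [dense|sparse].
    by exfalso; apply: nb; apply: (cycle_bad_dense x0 vc cc ec dense).
  have : has (predC inA) c.
    rewrite has_count; apply: (ar_pos k1 _ sparse).
    by rewrite count_predC.
  case/hasP => b bc /= bB.
  have bS : b \in S by move/subsetP: ZS; apply; rewrite inE.
  have := irr b bS; rewrite (negbTE bB) addn0.
  have uc : uniq c by case/and3P: vc.
  have clb : forall w, w \in S -> h b w -> w \in c.
    move=> w wS hw; apply/negPn/negP => wc.
    have := clc b w; rewrite inE bc => /(_ isT); rewrite !inE wc wS hw.
    by move/(_ isT).
  have d1 := deg_le_count uc clb.
  have d2 : count (h b) c <= count inA c.
    apply: sub_count => w; rewrite /h (negbTE bB) /=; by case/andP.
  by rewrite ltnNge (leq_trans d1 (leq_trans d2 sparse)).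
have := count_nocross nh.
rewrite -/l => cn.
have i0 := irr x0 x0S; have il := irr l lS.
have key := ar_key i0 il d0 dl cn.
case a0: (inA x0).
  exfalso; apply: nb; apply: (prefix_bad (z := x0) vs) => //=.
  by rewrite a0 in key; apply: ar2 key.
case al: (inA l).
  exfalso; apply: nb; apply: (prefix_bad (z := x0) (vpath_rev vs)).
    by rewrite head_rev.
  by rewrite size_rev; rewrite a0 al in key; apply: ar2b key.
rewrite a0 al !addn0 in key.
move: key; clear -vs nb a0 k1.
case: p vs => [|y p'] vs; first by rewrite /= addn2.
move=> key.
have hy : h x0 y by case/and3P: vs => _ _ /= /andP[].
have yA : inA y by move: hy; rewrite /h a0 /=; case/andP.
exfalso; apply: nb; apply: (prefix_bad (s := y :: p') (z := y)) => //.
  case/and3P: vs => /= /andP[_ u] /andP[_ a] /andP[_ sp]; apply/and3P; split => //.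
by apply: ar3 key.
Qed.


Definition Fs (S : {set T}) := \sum_(v in S) (dA S v - (k - 1) * inA v).
Definition Ws (S : {set T}) := \sum_(v in S) (k - inA v).

Lemma ar_red D d F F' X (a : bool) : D + a <= k -> d <= D -> X <= a * D ->
  F <= F' + X -> d - (k - 1) * a + F <= F' + (k - a).
Proof. case: a => /=; lia. Qed.

Lemma dA_D1 (S : {set T}) v w : v \in S ->
  dA S w = (inA v && e w v) + dA (S :\ v) w.
Proof. by move=> vS; rewrite /dA (big_setD1 v vS). Qed.

Lemma reduce (S : {set T}) v : v \in S -> degS S v + inA v <= k ->
  Fs S <= Fs (S :\ v) + (k - inA v).
Proof.
move=> vS dv; rewrite /Fs (big_setD1 v vS) /=.
have dAv : dA S v <= degS S v.
  rewrite /dA /degS; apply: leq_sum => w _; rewrite /h.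
  by case: (inA w); case: (e v w); rewrite ?orbT.
have X : \sum_(w in S :\ v) ((inA v && e w v) : nat) <= inA v * degS S v.
  case av: (inA v) => /=; last by rewrite big1.
  rewrite mul1n /degS (big_setD1 v vS) /= [X in _ <= X]addnC.
  apply: leq_trans (leq_addr _ _); apply: leq_sum => w _.
  by rewrite /h av orTb andbT esym.
apply: (ar_red dv dAv X).
rewrite -big_split /=; apply: leq_sum => w wS.
have wS' : w \in S by move: wS; rewrite in_setD1; case/andP.
rewrite (dA_D1 w vS); lia.
Qed.

Lemma Ws_D1 (S : {set T}) v : v \in S -> Ws S = (k - inA v) + Ws (S :\ v).
Proof. by move=> vS; rewrite /Ws (big_setD1 v vS). Qed.

Lemma split_closed (S Z : {set T}) : Z \subset S -> closedZ S Z ->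
  Fs S = Fs Z + Fs (S :\: Z) /\ Ws S = Ws Z + Ws (S :\: Z).
Proof.
move=> ZS cl.
have SZ : S :&: Z = Z by apply/setIidPr.
split; last by rewrite /Ws (big_setID Z) SZ.
rewrite /Fs (big_setID Z) SZ; congr (_ + _); apply: eq_bigr => v vZ.
- congr (_ - _); rewrite /dA (big_setID Z) SZ /= [X in _ + X]big1 ?addn0 // => w wSZ.
  have := cl v w vZ wSZ; rewrite /h.
  by case: (inA w); case: (e v w); rewrite ?orbT.
- congr (_ - _); rewrite /dA (big_setID Z) SZ /= big1 ?add0n // => w wZ.
  have := cl w v wZ vZ; rewrite /h esym.
  by case: (inA w); case: (e v w); rewrite ?orbT.
Qed.


Lemma ar_small1 dd a (b : bool) : a <= k - 1 -> dd <= a -> dd - (k - 1) * b <= k - b.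
Proof. case: b => /=; lia. Qed.

Lemma ar_small2 x y z nB : x + y <= z - 1 -> z <= 2 * k - 1 -> y <= nB -> nB <= k - 1 ->
  x - (k - 1) + y <= k - 1.
Proof. lia. Qed.

Lemma small (Z : {set T}) : #|Z| <= 2 * k - 1 -> Fs Z <= Ws Z.
Proof.
move=> cZ.
set a := \sum_(v in Z) (inA v : nat).
have dAa : forall v, dA Z v <= a.
  move=> v; apply: leq_sum => w _; case: (inA w) => //=; exact: leq_b1.
case: (leqP a (k - 1)) => [ak|ka].
  by apply: leq_sum => v _; apply: (ar_small1 _ ak (dAa v)).
set nB := \sum_(v in Z | ~~ inA v) 1.
have anB : a + nB = #|Z|.
  rewrite -sum1_card (bigID inA) /=; congr (_ + _).
  rewrite /a big_mkcond [RHS]big_mkcond; apply: eq_bigr => v _.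
  by case: (v \in Z); case: (inA v).
have nBk : nB <= k - 1 by move: anB cZ ka; clear; lia.
set dB := fun w => \sum_(v in Z | ~~ inA v) (e w v : nat).
have eF : Fs Z = \sum_(w in Z | inA w) ((dA Z w - (k - 1)) + dB w).
  rewrite big_split /= /Fs (bigID inA) /=; congr (_ + _).
    by apply: eq_bigr => v /andP[_ ->]; rewrite muln1.
  under eq_bigr => v /andP[_ /negbTE ->] do rewrite muln0 subn0.
  rewrite /dA exchange_big /= (bigID inA) /= [X in _ + X]big1 ?addn0.
    apply: eq_bigr => w /andP[_ ->]; apply: eq_bigr => v _; by rewrite esym.
  by move=> w /andP[_ /negbTE wA]; rewrite big1 // => v _; rewrite wA.
rewrite eF.
have W1 : \sum_(w in Z | inA w) (k - 1) <= Ws Z.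
  rewrite /Ws [X in _ <= X](bigID inA) /=; apply: leq_trans _ (leq_addr _ _).
  by apply: leq_sum => v /andP[_ ->].
apply: leq_trans W1; apply: leq_sum => w /andP[wZ wA].
apply: (ar_small2 _ cZ _ nBk).
  have -> : dA Z w + dB w = \sum_(x in Z) (e w x : nat).
    rewrite [RHS](bigID inA) /=; congr (_ + _).
    rewrite /dA big_mkcond [RHS]big_mkcond; apply: eq_bigr => v _.
    by case: (v \in Z); case: (inA v).
  rewrite (big_setD1 w wZ) /= eirr add0n (cardsD1 w Z) wZ add1n subn1 /=.
  rewrite -sum1_card; apply: leq_sum => v _; by case: (e w v).
by apply: leq_sum => v _; case: (e w v).
Qed.

Lemma bad_mono (S1 S2 : {set T}) : S1 \subset S2 -> bad S1 -> bad S2.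
Proof.
move=> sub [s [z [vs rest]]]; exists s, z; split => //.
case/and3P: vs => u a p; apply/and3P; split => //.
by apply: sub_all a => x; apply: (subsetP sub).
Qed.

Lemma mainL (S : {set T}) : ~ bad S -> Fs S <= Ws S.
Proof.
move: {2}#|S| (leqnn #|S|) => n; elim: n S => [|n IH] S cS nb.
  move: cS; rewrite leqn0 cards_eq0 => /eqP ->; by rewrite /Fs big_set0.
case: (boolP [exists v in S, degS S v + inA v <= k]) => [/exists_inP [v vS dv]|nex].
  apply: leq_trans (reduce vS dv) _; rewrite (Ws_D1 vS) addnC leq_add2l.
  apply: IH; first by move: cS; rewrite (cardsD1 v S) vS add1n ltnS.
  by move=> bb; apply: nb; apply: bad_mono bb; apply: subD1set.
have irr : forall v, v \in S -> k < degS S v + inA v.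
  move=> v vS; rewrite ltnNge; apply/negP => dv; move/negP: nex; apply.
  by apply/exists_inP; exists v.
case: (set_0Vmem S) => [->|[x xS]]; first by rewrite /Fs /Ws !big_set0.
have [Z [ZS Z0 cZ clZ]] := irred xS nb irr.
have [-> ->] := split_closed ZS clZ.
apply: leq_add; first exact: small.
apply: IH.
  have lt : #|S :\: Z| < #|S|.
    rewrite cardsD (setIidPr ZS).
    have z0 : 0 < #|Z| by rewrite card_gt0.
    have zs : #|Z| <= #|S| := subset_leq_card ZS.
    move: z0 zs; generalize #|Z| #|S|; clear; lia.
  by rewrite -ltnS (leq_trans lt cS).
by move=> bb; apply: nb; apply: bad_mono bb; apply: subsetDl.
Qed.

End Comb.


Lemma path_cycle n (e : rel 'I_n) (u : 'I_n) (s : seq 'I_n) (z : 'I_n) :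
  symmetric e -> s != [::] ->
  vpath e (fun w => e u w) (setT :\ u) s ->
  e u (head z s) -> e u (last z s) -> contains_cycle e (size s).+1.
Proof.
move=> esym; case: s => [|x p] // _ vs hx hl; rewrite /= in hx hl.
case/and3P: vs => us as_ ps.
have un : uniq (u :: x :: p).
  rewrite cons_uniq us andbT; apply/negP => ux.
  by move/allP: as_ => /(_ u ux); rewrite !inE eqxx.
exists (fun i : 'I_(size (x :: p)).+1 => nth u (u :: x :: p) i); split.
  move=> i j /eqP; rewrite nth_uniq // => /eqP; exact: val_inj.
move=> i; rewrite /ordS /=.
have pe : path e u (x :: p).
  rewrite /= hx /=; apply: sub_path ps => a b; rewrite /h; by case/andP.
case: (ltnP i (size p).+1) => ip.
  rewrite modn_small; last by rewrite ltnS.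
  by move/(pathP u): pe => /(_ i ip).
have ei : nat_of_ord i = (size p).+1.
  by apply/eqP; rewrite eqn_leq ip andbT -ltnS.
rewrite ei modnn /= -/(nth u (x :: p) (size p)) -last_nth esym.
exact: hl.
Qed.

Lemma comb_bound n (e : rel 'I_n) (u : 'I_n) k : symmetric e -> irreflexive e -> 0 < k ->
  ~ (contains_cycle e (2 * k + 1) \/ contains_cycle e (2 * k + 2)) ->
  \sum_(w : 'I_n) (\sum_(i : 'I_n) ((e i u && e w i) : nat) - (k - 1) * e u w) <= k * n.
Proof.
move=> esym eirr k1 nc.
set S := setT :\ u.
have nb : ~ bad e (fun w => e u w) k S.
  move=> [s [z [vs [sz [hA lA]]]]]; apply: nc.
  have ns : s != [::] by case: s sz {vs hA lA} => //=; lia.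
  have := path_cycle esym ns vs hA lA.
  case/andP: sz => s1 s2.
  case: (ltnP (size s) (2 * k + 1)) => s3.
    have -> : (size s).+1 = 2 * k + 1 by lia.
    by left.
  have -> : (size s).+1 = 2 * k + 2 by lia.
  by right.
have mL := mainL esym eirr k1 nb.
have inS : forall w, (w \in S) = (w != u) by move=> w; rewrite !inE andbT.
rewrite (bigD1 u) //= eirr muln0 subn0.
have E1 : \sum_(i : 'I_n) ((e i u && e u i) : nat) = \sum_(i in S) (e u i : nat).
  rewrite (bigD1 u) //= eirr add0n; apply: eq_big => i; first by rewrite inS.
  by move=> _; rewrite esym andbb.
have E2 : \sum_(w | w != u) (\sum_(i : 'I_n) ((e i u && e w i) : nat) - (k - 1) * e u w)
          = Fs e (fun w => e u w) k S.
  rewrite /Fs; apply: eq_big => w; first by rewrite inS.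
  move=> wu; congr (_ - _); rewrite /dA (bigD1 u) //= eirr add0n.
  by apply: eq_big => i; [rewrite inS | move=> _; rewrite esym].
rewrite E1 E2; apply: leq_trans (leq_add (leqnn _) mL) _.
rewrite /Ws -big_split /=.
have -> : \sum_(i in S) (e u i + (k - e u i)) = \sum_(i in S) k.
  by apply: eq_bigr => i _; rewrite subnKC //; case: (e u i) => //=.
rewrite sum_nat_const mulnC leq_mul2l; apply/orP; right.
by rewrite (leq_trans (subset_leq_card (subsetT S))) // cardsT card_ord.
Qed.

Unset Implicit Arguments.
Local Open Scope ring_scope.
Lemma realfact (R : realType) (K N mu s : R) : 1 <= K -> 0 <= N -> 0 <= s ->
  s ^+ 2 = K * N + (K + 1) ^+ 2 / 4 -> mu > (K - 1) / 2 + s ->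
  K - 1 <= mu /\ K * N < mu * (mu - (K - 1)).
Proof.
move=> K1 N0 s0 sE hm.
have sK : (K + 1) / 2 <= s by nra.
split; first by lra.
have h1 : 0 < mu - (K - 1) / 2 - s by lra.
have h2 : 0 < mu - (K - 1) / 2 + s by lra.
nra.
Qed.

Lemma mc_of (R : realType) (c mu : R) : c <= mu -> 0 <= mu - c.
Proof. by rewrite subr_ge0. Qed.

Theorem theorem3 (R : realType) (k n : nat) (e : rel 'I_n) (mu : R) :
  (1 <= k)%N ->
  simple_graph e ->
  is_spectral_radius e mu ->
  mu > (k%:R - 1) / 2 + Num.sqrt (k%:R * n%:R + (k%:R + 1) ^+ 2 / 4) ->
  contains_cycle e (2 * k + 1) \/ contains_cycle e (2 * k + 2).
Proof.
move=> k1 [esym eirr] [ev _] hmu.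
case: (classic (contains_cycle e (2 * k + 1) \/ contains_cycle e (2 * k + 2))) => // nc.
exfalso.
case/eigenvalueP: ev => v vA v0.
pose y := fun i => (`|v 0 i| : R).
have eqj : forall j, mu * v 0 j = \sum_i v 0 i * (e i j)%:R.
  move=> j; have := congr1 (fun M : 'rV[R]_n => M 0 j) vA; rewrite !mxE => <-.
  by apply: eq_bigr => i _; rewrite mxE.
have [i0 vi0] : exists i, v 0 i != 0.
  case: (pickP (fun i => v 0 i != 0)) => [i vi | all0]; first by exists i.
  exfalso; move/eqP: v0; apply; apply/rowP => i; rewrite !mxE.
  by have := all0 i => /negbFE/eqP.
have [u umax] : exists u, forall i, y i <= y u.
  case: (@arg_maxP _ _ _ i0 xpredT y isT) => u _ H.
  by exists u => i; apply: H.
have yu0 : 0 < y u by apply: lt_le_trans (umax i0); rewrite normr_gt0.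
have y0 : forall i, 0 <= y i by move=> i; apply: normr_ge0.
set D := k%:R * n%:R + (k%:R + 1) ^+ 2 / 4 : R.
have D0 : 0 <= D.
  by apply: addr_ge0; [apply: mulr_ge0; apply: ler0n | apply: divr_ge0; [apply: sqr_ge0 | ]].
have K1 : (1 : R) <= k%:R by rewrite ler1n.
have [cK key] := @realfact R _ _ _ _ K1 (ler0n _ n) (sqrtr_ge0 D) (sqr_sqrtr D0) hmu.
set c := k%:R - 1 in cK key.
have cnat : c = ((k - 1)%N)%:R :> R by rewrite natrB.
have mu0 : 0 <= mu by apply: le_trans cK; rewrite cnat ler0n.
have H1 : forall j, mu * y j <= \sum_i y i * (e i j)%:R.
  move=> j; rewrite /y -(ger0_norm mu0) -normrM eqj.
  apply: le_trans; first exact: ler_norm_sum. apply: ler_sum => i _.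
  by rewrite normrM normr_nat.
pose d := fun w => (\sum_i ((e i u && e w i) : nat))%N.
have stepA : mu * (mu - c) * y u <=
    \sum_i (e i u)%:R * (\sum_w y w * (e w i)%:R - c * y i).
  have -> : mu * (mu - c) * y u = (mu - c) * (mu * y u) by ring.
  apply: le_trans; first exact: (ler_wpM2l (@mc_of R c mu cK) (H1 u)).
  rewrite mulr_sumr; apply: ler_sum => i _.
  have -> : (mu - c) * (y i * (e i u)%:R) = (e i u)%:R * (mu * y i - c * y i) by ring.
  by apply: ler_wpM2l; [apply: ler0n | rewrite lerD2r H1].
have stepB : \sum_i (e i u)%:R * (\sum_w y w * (e w i)%:R - c * y i) =
    \sum_w y w * ((d w)%:R - c * (e u w)%:R).
  transitivity (\sum_i \sum_w (e i u)%:R * (y w * (e w i)%:R) -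
                \sum_i c * ((e i u)%:R * y i)).
    by rewrite -sumrB; apply: eq_bigr => i _; rewrite mulrBr mulr_sumr mulrCA.
  rewrite exchange_big /= [RHS](eq_bigr (fun w => y w * (d w)%:R - y w * (c * (e u w)%:R))); last first.
    by move=> w _; rewrite mulrBr.
  rewrite sumrB; congr (_ - _).
    apply: eq_bigr => w _; rewrite /d natr_sum mulr_sumr; apply: eq_bigr => i _.
    by rewrite -mulnb natrM mulrCA.
  by apply: eq_bigr => w _; rewrite (esym w u); ring.
have stepC : forall w, y w * ((d w)%:R - c * (e u w)%:R) <=
    y u * ((d w - (k - 1) * e u w)%N)%:R.
  move=> w; rewrite cnat -natrM.
  case: (leqP ((k - 1) * e u w) (d w)) => hw.
    by rewrite -natrB //; exact: (ler_wpM2r (ler0n _ _) (umax w)).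
  apply: (@le_trans _ _ 0); last by apply: mulr_ge0; [apply: ltW | apply: ler0n].
  apply: mulr_ge0_le0 => //; rewrite subr_le0 ler_nat; exact: ltnW.
have stepD := @comb_bound n e u k esym eirr k1 nc.
have fin : mu * (mu - c) * y u <= y u * (k * n)%:R.
  apply: le_trans; first exact: stepA. rewrite stepB.
  apply: le_trans; first exact: (ler_sum _ (fun w _ => stepC w)).
  rewrite -mulr_sumr -natr_sum; apply: ler_wpM2l; first exact: ltW.
  by rewrite ler_nat.
move: fin; rewrite [X in _ <= X]mulrC ler_pM2r // natrM => fin.
by move: (lt_le_trans key fin); rewrite ltxx.
Qed.
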